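(* Let $\mathcal{D}$ be a $\{K_3,K_4\}$-decomposition of $K_{18}$ with $\alpha=13$, let $W$ be the set of vertices $x$ with $\alpha_x\ge 2$, and for $i\in\{0,1,2,3\}$ let $t_i$ be the number of copies of $K_3$ in $\mathcal{D}$ having exactly $i$ vertices in $W$. Then $(t_0,t_1,t_2,t_3)\neq(0,3,5,5)$.
   Context: A $\{K_3,K_4\}$-decomposition of $K_v$ is a collection of subgraphs, each isomorphic to $K_3$ or $K_4$, such that every edge of $K_v$ lies in exactly one of them. $\alpha$ is the number of copies of $K_3$ in the decomposition, and for a vertex $x$, $\alpha_x$ is the number of copies of $K_3$ in the decomposition containing $x$. *)

(* Defs.v *)
From mathcomp Require Import all_boot.
Set Implicit Arguments. Unset Strict Implicit. Unset Printing Implicit Defensive.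

(* A {K3,K4}-decomposition of K_v: vertex set 'I_v; each copy of K3/K4 is
   represented by its vertex set (a block of size 3 or 4); the list of blocks
   must cover each edge {x,y} (x <> y) of K_v exactly once. *)
Definition K34_decomposition (v : nat) (D : seq {set 'I_v}) : Prop :=
  (forall B, B \in D -> (#|B| == 3) || (#|B| == 4)) /\
  (forall x y : 'I_v, x != y -> count (fun B : {set 'I_v} => (x \in B) && (y \in B)) D = 1).

Definition alpha (v : nat) (D : seq {set 'I_v}) : nat :=
  count (fun B : {set 'I_v} => #|B| == 3) D.

Definition alpha_at (v : nat) (D : seq {set 'I_v}) (x : 'I_v) : nat :=
  count (fun B : {set 'I_v} => (#|B| == 3) && (x \in B)) D.

Definition Wset (v : nat) (D : seq {set 'I_v}) : {set 'I_v} :=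
  [set x | 2 <= alpha_at D x].

Definition t_count (v : nat) (D : seq {set 'I_v}) (i : nat) : nat :=
  count (fun B : {set 'I_v} => (#|B| == 3) && (#|B :&: Wset D| == i)) D.

(* Main.v *)
Require Import Defs.
From mathcomp Require Import all_boot.
From mathcomp Require Import zify.

Lemma sumI (T : finType) (S B : {set T}) : \sum_(x in S) (x \in B : nat) = #|B :&: S|.
Proof.
rewrite -sum1_card big_mkcond [RHS]big_mkcond /=.
apply: eq_bigr => x _; rewrite inE; by case: (x \in B); case: (x \in S).
Qed.

Lemma L_inc (T : finType) (P : pred {set T}) (S : {set T}) (D : seq {set T}) :
  \sum_(x in S) count (fun B => P B && (x \in B)) D = \sum_(B <- D | P B) #|B :&: S|.
Proof.
elim: D => [|B D IH]; first by rewrite big_nil big1.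
rewrite big_cons /= big_split IH /=.
case: (P B) => /=; first by rewrite sumI.
by rewrite big1.
Qed.

Lemma L2 (T : finType) (S : {set T}) (D : seq {set T}) x : x \in S ->
  \sum_(y in S | y != x) count (fun B : {set T} => (x \in B) && (y \in B)) D
  = \sum_(B <- D) (x \in B) * (#|B :&: S| - 1).
Proof.
move=> xS; elim: D => [|B D IH]; first by rewrite big_nil big1.
rewrite big_cons /= big_split IH /=; congr (_ + _).
case xB: (x \in B) => /=; last by rewrite big1.
rewrite mul1n -sumI [in RHS](bigD1 x) //= xB.
lia.
Qed.

Lemma L_pair (T : finType) (S : {set T}) (D : seq {set T}) :
  \sum_(x in S) \sum_(y in S | y != x) count (fun B : {set T} => (x \in B) && (y \in B)) D
  = \sum_(B <- D) #|B :&: S| * (#|B :&: S| - 1).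
Proof.
rewrite (eq_bigr (fun x => \sum_(B <- D) (x \in B) * (#|B :&: S| - 1))); last first.
  by move=> x xS; rewrite L2.
rewrite exchange_big /=; apply: eq_bigr => B _.
by rewrite -big_distrl /= sumI.
Qed.

Lemma Ldec (T : finType) (S : {set T}) (D : seq {set T}) :
  (forall x y : T, x != y -> count (fun B : {set T} => (x \in B) && (y \in B)) D = 1) ->
  \sum_(x in S) \sum_(y in S | y != x) count (fun B : {set T} => (x \in B) && (y \in B)) D
  = #|S| * (#|S| - 1).
Proof.
move=> H.
rewrite -sum_nat_const; apply: eq_bigr => x xS.
rewrite (eq_bigr (fun _ => 1)); last by move=> y /andP[_ yx]; apply: H; rewrite eq_sym.
have E : \sum_(y in S) 1 = #|S| := sum1_card _. rewrite (bigD1 x) //= in E; lia.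
Qed.

Lemma Lvert (T : finType) (D : seq {set T}) x :
  (forall B, B \in D -> (#|B| == 3) || (#|B| == 4)) ->
  \sum_(B <- D) (x \in B) * (#|B :&: setT| - 1) =
  2 * count (fun B : {set T} => (#|B| == 3) && (x \in B)) D + 3 * count (fun B : {set T} => (#|B| == 4) && (x \in B)) D.
Proof.
elim: D => [|B D IH] H; first by rewrite big_nil.
rewrite big_cons /= IH; last by move=> C hC; apply: H; rewrite inE hC orbT.
rewrite setIT; have := H B (mem_head _ _); case/orP => /eqP ->; case: (x \in B) => /=; lia.
Qed.

Lemma Lsplit (T : finType) (D : seq {set T}) (F : {set T} -> nat) :
  (forall B, B \in D -> (#|B| == 3) || (#|B| == 4)) ->
  \sum_(B <- D) F B = \sum_(B <- D | #|B| == 3) F B + \sum_(B <- D | #|B| == 4) F B.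
Proof.
elim: D => [|B D IH] H; first by rewrite !big_nil.
rewrite !big_cons IH; last by move=> C hC; apply: H; rewrite inE hC orbT.
have := H B (mem_head _ _); case/orP => /eqP -> /=; lia.
Qed.

Lemma Lconst (T : finType) (D : seq {set T}) (P : pred {set T}) c :
  \sum_(B <- D | P B) c = c * count P D.
Proof.
elim: D => [|B D IH]; first by rewrite big_nil muln0.
rewrite big_cons /= IH; case: (P B) => /=; lia.
Qed.

Lemma Ltri (T : finType) (D : seq {set T}) (W : {set T}) (f : nat -> nat) :
  \sum_(B <- D | #|B| == 3) f #|B :&: W| =
  f 0 * count (fun B : {set T} => (#|B| == 3) && (#|B :&: W| == 0)) D +
  f 1 * count (fun B : {set T} => (#|B| == 3) && (#|B :&: W| == 1)) D +
  f 2 * count (fun B : {set T} => (#|B| == 3) && (#|B :&: W| == 2)) D +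
  f 3 * count (fun B : {set T} => (#|B| == 3) && (#|B :&: W| == 3)) D.
Proof.
elim: D => [|B D IH]; first by rewrite big_nil /=; lia.
rewrite big_cons /= IH; case e: (#|B| == 3) => /=; last by lia.
have : #|B :&: W| <= 3 by rewrite -(eqP e); apply: subset_leq_card; apply: subsetIl.
move: (#|B :&: W|) => k.
case: k => [|[|[|[|k]]]] //= _; lia.
Qed.

Theorem mainTheorem13 (D : seq {set 'I_18}) :
  K34_decomposition D -> alpha D = 13 ->
  (t_count D 0, t_count D 1, t_count D 2, t_count D 3) <> (0, 3, 5, 5).
Proof.
move=> [Hsz Hpair] Halpha [t0 t1 t2 t3].
rewrite /t_count in t0 t1 t2 t3; rewrite /alpha in Halpha.
set W := Wset D in t0 t1 t2 t3.
set b := fun x : 'I_18 => count (fun B : {set 'I_18} => (#|B| == 4) && (x \in B)) D.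
set c4 := count (fun B : {set 'I_18} => #|B| == 4) D.
have H1 x : 2 * alpha_at D x + 3 * b x = 17.
  rewrite /alpha_at /b -Lvert //.
  rewrite -L2 ?inE //.
  rewrite (eq_bigr (fun _ => 1)); last by move=> y /andP[_ yx]; apply: Hpair; rewrite eq_sym.
  have E : \sum_(y in [set: 'I_18]) 1 = #|[set: 'I_18]| := sum1_card _.
  rewrite (bigD1 x) ?inE //= cardsT card_ord in E; by move: E; rewrite add1n => -[->].
have E1 : \sum_(x in W) alpha_at D x = 28.
  rewrite /alpha_at (@L_inc _ (fun B => #|B| == 3)).
  have := @Ltri _ D W (fun k => k); rewrite /= => ->; by rewrite t0 t1 t2 t3.
have E2 : \sum_(x in [set: 'I_18]) alpha_at D x = 39.
  rewrite /alpha_at (@L_inc _ (fun B => #|B| == 3)).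
  rewrite (eq_bigr (fun _ => 3)); last by move=> B /eqP e; rewrite setIT e.
  rewrite Lconst; lia.
have E3 : \sum_(x in ~: W) alpha_at D x = #|~: W|.
  rewrite -sum1_card; apply: eq_bigr => x; rewrite !inE => xW.
  have := H1 x; move: xW; lia.
have En : #|W| = 7.
  move: E2; rewrite (big_setID W) setTI setTD E1 E3 cardsCs setCK card_ord /=; lia.
have E4 : \sum_(x in W) b x = 21.
  have : \sum_(x in W) (2 * alpha_at D x + 3 * b x) = 17 * #|W|.
    by rewrite (eq_bigr (fun _ => 17)) // sum_nat_const mulnC.
  rewrite big_split /= -!big_distrr /= E1 En; lia.
have E5 : \sum_(B <- D | #|B| == 4) #|B :&: W| = 21.
  by rewrite -E4 /b (@L_inc _ (fun B => #|B| == 4)).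
have E6 : \sum_(B <- D | #|B| == 4) #|B :&: W| * (#|B :&: W| - 1) = 2.
  have := @Ldec _ W D Hpair; rewrite L_pair (@Lsplit _ D _ Hsz).
  have := @Ltri _ D W (fun k => k * (k - 1)); rewrite /= => ->; rewrite t0 t1 t2 t3 En /=; lia.
have E7 : c4 = 19.
  have := @Ldec _ [set: 'I_18] D Hpair; rewrite L_pair (@Lsplit _ D _ Hsz).
  rewrite (eq_bigr (fun _ => 6)); last by move=> B /eqP e; rewrite setIT e.
  rewrite [X in _ + X = _](eq_bigr (fun _ => 12)); last by move=> B /eqP e; rewrite setIT e.
  rewrite !Lconst cardsT card_ord; lia.
have : \sum_(B <- D | #|B| == 4) (2 * #|B :&: W|) <= \sum_(B <- D | #|B| == 4) (#|B :&: W| * (#|B :&: W| - 1) + 2).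
  by apply: leq_sum => B _; nia.
rewrite [X in _ <= X]big_split Lconst E6 -/c4 E7 -big_distrr E5 /=; lia.
Qed.
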